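(* Let $(X_{1,\infty},f_{1,\infty},\mu_{1,\infty})$ be a metric nonautonomous dynamical system. Suppose each $X_n$ is a disjoint union $X_n=Y_n\,\dot\cup\, Z_n$ of measurable sets with $f_n(Y_n)\subset Y_{n+1}$, $f_n(Z_n)\subset Z_{n+1}$, and $\mu_n(Y_n)=c$ for all $n$, where $0<c\le1$ is a constant. Let $g_n=f_n|_{Y_n}:Y_n\to Y_{n+1}$ and $\nu_n(A)=\mu_n(A)/c$ for measurable $A\subset Y_n$, so that $(Y_{1,\infty},g_{1,\infty},\nu_{1,\infty})$ is a metric NDS. Let $\mathcal{E}$ be an admissible class for $f_{1,\infty}$ such that $\mathcal{P}_{1,\infty}\in\mathcal{E}$ implies $\{\mathcal{P}_n\vee\{Y_n,Z_n\}\}_{n\ge1}\in\mathcal{E}$. Then \[ \mathcal{E}|_{Y_{1,\infty}}:=\{\mathcal{Q}_{1,\infty}\;:\;\exists\,\mathcal{P}_{1,\infty}\in\mathcal{E}\text{ with }\mathcal{Q}_n=\{Y_n\}\vee\mathcal{P}_n\text{ for all }n\} \] is an admissible class for $(Y_{1,\infty},g_{1,\infty})$ and $c\,h_{\mathcal{E}|_{Y_{1,\infty}}}(g_{1,\infty})\le h_{\mathcal{E}}(f_{1,\infty})$. If $c=1$, equality holds.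
   Context: A metric NDS consists of probability spaces $(X_n,\mathcal{A}_n,\mu_n)$ and measurable maps $f_n:X_n\to X_{n+1}$ with $f_n\mu_n=\mu_{n+1}$. $f_k^n=f_{k+n-1}\circ\cdots\circ f_k$, $f_k^{-n}$ = preimage. $\{Y_n\}\vee\mathcal{P}_n$ denotes the partition $\{Y_n\cap P:P\in\mathcal{P}_n\}$ of $Y_n$. $H_\mu(\mathcal{P})=-\sum_P\mu(P)\log\mu(P)$; $h(f_{1,\infty};\mathcal{P}_{1,\infty})=\limsup_n\frac1nH_{\mu_1}(\bigvee_{i=0}^{n-1}f_1^{-i}\mathcal{P}_{i+1})$ (and analogously for $g_{1,\infty}$ with $\nu_1$); $h_{\mathcal{E}}(f_{1,\infty})=\sup_{\mathcal{P}_{1,\infty}\in\mathcal{E}}h(f_{1,\infty};\mathcal{P}_{1,\infty})$. Admissible class for an NDS $f_{1,\infty}$: a nonempty class $\mathcal{E}$ of sequences of finite measurable partitions $\{\mathcal{P}_n\}$ of $X_n$ such that (A) for each member, $\#\mathcal{P}_n\le N$ for some $N$ and all $n$; (B) $\mathcal{E}$ is closed under passing to termwise coarser sequences; (C) if $\mathcal{P}_{1,\infty}\in\mathcal{E}$ and $m\ge1$, then the sequence $\{\bigvee_{i=0}^{m-1}f_k^{-i}\mathcal{P}_{k+i}\}_{k\ge1}$ belongs to $\mathcal{E}$. *)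

(* Defs.v *)
From HB Require Import structures.
From mathcomp Require Import all_boot all_order all_algebra.
From mathcomp Require Import all_classical all_reals all_analysis.
Set Implicit Arguments. Unset Strict Implicit. Unset Printing Implicit Defensive.
Import Order.TTheory GRing.Theory Num.Theory.
Local Open Scope classical_set_scope.
Local Open Scope ring_scope.

(* A nonautonomous system is given by spaces X n (n : nat; index 0 plays the
   role of the paper's index 1), maps f n : X n -> X n.+1, and a "carrier"
   D n (a subset of X n: D n = setT for the full system, D n = Y n for the
   restricted system, on which the maps act by restriction). *)

Section Defs.
Context (R : realType) (d : nat -> measure_display)
        (X : forall n, measurableType (d n)).

Definition partition_of (dT : measure_display) (T : measurableType dT)
  (D : set T) (P : set (set T)) : Prop :=
  [/\ finite_set P,
      (forall A, P A -> measurable A /\ A `<=` D),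
      (forall A B, P A -> P B -> A `&` B !=set0 -> A = B) &
      \bigcup_(A in P) A = D].

Definition card_le (T : Type) (P : set (set T)) (N : nat) : Prop :=
  exists F : nat -> set T, P = F @` `I_N.

Definition coarser (T : Type) (Q P : set (set T)) : Prop :=
  forall A, P A -> exists2 B, Q B & A `<=` B.

Definition pjoin (T : Type) (P Q : set (set T)) : set (set T) :=
  [set C | exists2 A, P A & exists2 B, Q B & C = A `&` B].

(* djoin D f P m k = \/_{i=0}^{m-1} (f_k^i|_D)^{-1} P_{k+i}, as a partition of D k,
   computed by P_k \/ (f_k|_{D k})^{-1} (djoin (m-1) (k+1)). *)
Definition djoin (D : forall n, set (X n)) (f : forall n, X n -> X n.+1)
  (P : forall n, set (set (X n))) : nat -> forall k, set (set (X k)) :=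
  fix dj (m : nat) : forall k, set (set (X k)) :=
  match m with
  | 0 => fun k => [set D k]
  | m'.+1 => fun k =>
      [set C | exists2 A, P k A &
               exists2 B, dj m' k.+1 B & C = A `&` (D k `&` f k @^-1` B)]
  end.
Arguments djoin : clear implicits.

Definition admissible (D : forall n, set (X n)) (f : forall n, X n -> X n.+1)
  (E : set (forall n, set (set (X n)))) : Prop :=
  [/\ E !=set0,
      (forall P, E P -> forall n, partition_of (D n) (P n)),
      (forall P, E P -> exists N, forall n, card_le (P n) N),
      (forall P Q, E P ->
         (forall n, partition_of (D n) (Q n) /\ coarser (Q n) (P n)) -> E Q) &
      (forall P m, E P -> (1 <= m)%N -> E (djoin D f P m))].

(* H_m(P) = - sum_{A in P} m(A) log m(A)   (with 0 log 0 = 0, as ln 0 = 0) *)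
Definition entropy (T : Type) (m : set T -> R) (P : set (set T)) : R :=
  - \sum_(A \in P) m A * ln (m A).

Definition ent_seq (D : forall n, set (X n)) (f : forall n, X n -> X n.+1)
  (m : set (X 0%N) -> R) (P : forall n, set (set (X n))) : \bar R :=
  limn_esup (fun n => (entropy m (djoin D f P n 0%N) / n%:R)%:E).

Definition ent_class (D : forall n, set (X n)) (f : forall n, X n -> X n.+1)
  (m : set (X 0%N) -> R) (E : set (forall n, set (set (X n)))) : \bar R :=
  ereal_sup [set ent_seq D f m P | P in E].

Definition restrict_class (Y : forall n, set (X n))
  (E : set (forall n, set (set (X n)))) : set (forall n, set (set (X n))) :=
  [set Q | exists2 P, E P & forall n, Q n = pjoin [set Y n] (P n)].

End Defs.
Arguments djoin {d X} D f P m k.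

(* Main.v *)
Require Import Defs.
From HB Require Import structures.
From mathcomp Require Import all_boot all_order all_algebra.
From mathcomp Require Import all_classical all_reals all_analysis.
Import Order.TTheory GRing.Theory Num.Theory.
Local Open Scope classical_set_scope.
Local Open Scope ring_scope.
Lemma pjoin1E (T0 : Type) (A : set T0) (P : set (set T0)) :
  pjoin [set A] P = (fun B => A `&` B) @` P.
Proof.
apply/seteqP; split => C /=.
  by move=> [_ -> [B PB ->]]; exists B.
by move=> [B PB <-]; exists A => //; exists B.
Qed.

Section S.
Context (d : nat -> measure_display) (X : forall n, measurableType (d n)).
Variable (f : forall n, X n -> X n.+1) (Y : forall n, set (X n)).
Hypothesis fY : forall n, f n @` Y n `<=` Y n.+1.


Lemma eq_aux k (A : set (X k)) (B : set (X k.+1)) :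
  Y k `&` (A `&` (setT `&` f k @^-1` B)) =
  (Y k `&` A) `&` (Y k `&` f k @^-1` (Y k.+1 `&` B)).
Proof.
apply/seteqP; split => x /=; last by move=> [[? ?] [? [? ?]]].
move=> [xY [xA [_ xB]]]; split; first by split.
by split => //; split => //; apply: fY; exists x.
Qed.

Lemma djoin_restr (P Q : forall n, set (set (X n))) :
  (forall n, Q n = pjoin [set Y n] (P n)) ->
  forall m k, djoin Y f Q m k = pjoin [set Y k] (djoin (fun n => setT) f P m k).
Proof.
move=> hQ; elim => [|m IH] k /=.
  rewrite pjoin1E image_set1 setIT //.
rewrite IH !pjoin1E; apply/seteqP; split => C /=.
  move=> [A]; rewrite hQ pjoin1E => -[A' PA' <-] [B [B' HB' <-] ->].
  exists (A' `&` (setT `&` f k @^-1` B')); first by exists A' => //; exists B'.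
  exact: eq_aux.
move=> [_ [A PA [B HB ->]] <-].
exists (Y k `&` A); first by rewrite hQ pjoin1E; exists A.
exists (Y k.+1 `&` B); first by exists B.
by rewrite eq_aux.
Qed.

Lemma djoin_til (P : forall n, set (set (X n))) (Z : forall n, set (X n)) :
  forall m k B, djoin (fun n => setT) f P m.+1 k B ->
  djoin (fun n => setT) f (fun n => pjoin (P n) ([set Y n] `|` [set Z n])) m.+1 k (Y k `&` B).
Proof.
elim => [|m IH] k B /=.
  move=> [A PA [B0 -> ->]].
  exists (A `&` Y k); first by exists A => //; exists (Y k) => //; left.
  exists setT => //.
  by apply/seteqP; split => x /=; [move=> [? [? ?]] | move=> [[? ?] ?]].
move=> [A PA [B0 HB0 ->]].
exists (A `&` Y k); first by exists A => //; exists (Y k) => //; left.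
exists (Y k.+1 `&` B0); first exact: IH.
apply/seteqP; split => x /=; last by move=> [[? ?] [? [? ?]]].
move=> [xY [xA [_ xB]]]; split; first by split.
by split => //; split => //; apply: fY; exists x.
Qed.
End S.
Section Ent.
Context (R : realType) (dT : measure_display) (T : measurableType dT)
  (mu : probability T R).

Lemma fsum_sub_le0 (I : choiceType) (S1 S2 : set I) (F : I -> R) :
  finite_set S2 -> S1 `<=` S2 -> (forall i, S2 i -> F i <= 0) ->
  \sum_(i \in S2) F i <= \sum_(i \in S1) F i.
Proof.
move=> fin sub F0; rewrite (fsbigID S1) // setIidr //.
by rewrite gerDl; apply: fsumr_le0 => i [? _]; exact: F0.
Qed.

Lemma fsum_le (I : choiceType) (S : set I) (F G : I -> R) :
  finite_set S -> (forall i, S i -> F i <= G i) ->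
  \sum_(i \in S) F i <= \sum_(i \in S) G i.
Proof.
move=> fin FG; rewrite !fsbig_finite // big_seq [X in _ <= X]big_seq.
by apply: ler_sum => i; rewrite in_fset_set // in_setE; exact: FG.
Qed.

Lemma term_le (c x : R) : 0 <= x -> 0 < c -> c <= 1 ->
  x * ln x <= c * (x / c * ln (x / c)).
Proof.
move=> x0 c0 c1; rewrite mulrA (mulrC c) divfK ?gt_eqF //.
have [->|xn0] := eqVneq x 0; first by rewrite !mul0r.
have xp : 0 < x by rewrite lt0r xn0.
apply: ler_wpM2l => //; rewrite ln_div ?posrE //.
by rewrite lerDl oppr_ge0 ln_le0.
Qed.

Lemma fine_mu_ge0 A : 0 <= fine (mu A).
Proof. exact/fine_ge0/measure_ge0. Qed.

Lemma fine_mu_le1 A : measurable A -> fine (mu A) <= 1.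
Proof.
move=> mA; have := probability_le1 mu mA.
by rewrite -[mu A]fineK ?fin_num_measure // lee_fin.
Qed.

Lemma ent_ineq (c : R) (S1 S2 : set (set T)) : 0 < c -> c <= 1 ->
  finite_set S2 -> S1 `<=` S2 -> (forall A, S2 A -> measurable A) ->
  c * entropy (fun A => fine (mu A) / c) S1 <= entropy (fun A => fine (mu A)) S2.
Proof.
move=> c0 c1 fin sub mS; rewrite /entropy mulrN lerN2 mulr_fsumr.
apply: (@le_trans _ _ (\sum_(A \in S1) fine (mu A) * ln (fine (mu A)))).
  apply: fsum_sub_le0 => //.
  move=> A /mS mA; apply: mulr_ge0_le0; first exact: fine_mu_ge0.
  exact/ln_le0/fine_mu_le1.
apply: fsum_le; first exact: sub_finite_set fin.
by move=> A _; apply: term_le => //; exact: fine_mu_ge0.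
Qed.

Lemma meas_I1 (Yo A : set T) : measurable Yo -> measurable A ->
  mu Yo = 1%E -> mu (Yo `&` A) = mu A.
Proof.
move=> mY mA hY.
have h0 : mu (~` Yo) = 0%E by rewrite probability_setC // hY subee.
have h1 : mu (A `&` ~` Yo) = 0%E.
  apply/eqP; rewrite -measure_le0 -h0; apply: le_measure; rewrite ?inE.
  - exact: measurableI (measurableC _).
  - exact: measurableC.
  - by apply: subIsetr.
rewrite -[in RHS](setIT A) -(setUv Yo) setIUr measureU.
- rewrite setIC; apply/esym; rewrite -[RHS]adde0; congr (_ + _)%E; apply: h1.
- exact: measurableI.
- exact: measurableI (measurableC _).
- by rewrite setIACA setICr setI0.
Qed.

Lemma fsbig_image_supp (I J : choiceType) (S : set I) (g : I -> J) (h : J -> R) :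
  (forall a b, S a -> S b -> h (g a) <> 0 -> g a = g b -> a = b) ->
  \sum_(j \in g @` S) h j = \sum_(i \in S) h (g i).
Proof.
move=> ginj; rewrite fsbig_supp [RHS]fsbig_supp.
have -> : g @` S `&` h @^-1` [set~ 0] =
    g @` (S `&` (fun i => h (g i)) @^-1` [set~ 0]).
  apply/seteqP; split => j /=.
    by move=> [[i Si <-] hj]; exists i.
  by move=> [i [Si hi] <-]; split => //; exists i.
rewrite fsbig_image //.
by move=> a b /[!inE] -[Sa ha] [Sb _] gab; exact: ginj.
Qed.


Lemma ent_eq1 (Yo : set T) (S : set (set T)) : measurable Yo -> mu Yo = 1%E ->
  (forall A, S A -> measurable A) ->
  (forall A B, S A -> S B -> A `&` B !=set0 -> A = B) ->
  entropy (fun A => fine (mu A) / 1) (pjoin [set Yo] S) =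
  entropy (fun A => fine (mu A)) S.
Proof.
move=> mY hY mS disj; rewrite /entropy pjoin1E; congr (- _).
under eq_fsbigr do rewrite divr1.
rewrite fsbig_image_supp.
  by apply: eq_fsbigr => A /[!inE] SA; rewrite meas_I1 //; exact: mS.
move=> A B SA SB hn0 eqAB; apply: disj => //.
apply/set0P/negP => /eqP AB0; apply: hn0.
have -> : Yo `&` A = set0.
  apply/seteqP; split => x //= [xY xA].
  have [_ xB] : (Yo `&` B) x by rewrite -eqAB.
  by have : (A `&` B) x by []; rewrite AB0.
by rewrite measure0 /= mul0r.
Qed.
End Ent.

Lemma limsup_scale (R : realType) (c : R) (u v : nat -> \bar R) : 0 < c ->
  (forall n, (c%:E * u n <= v n)%E) -> (c%:E * limn_esup u <= limn_esup v)%E.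
Proof.
move=> c0 uv; rewrite /limn_esup /limf_esup -ereal_inf_pZl //.
apply: le_ereal_inf_tmp => _ [V FV <-].
apply: ge_ereal_inf; exists (c%:E * ereal_sup (u @` V))%E.
  by exists (ereal_sup (u @` V)) => //; exists V.
rewrite -ereal_sup_pZl //; apply: ge_ereal_sup => _ [_ [n Vn <-] <-].
apply: le_trans (uv n) _; apply: ereal_sup_ubound; by exists n.
Qed.

Lemma part_restr (dT : measure_display) (T : measurableType dT) (D : set T)
  (P : set (set T)) : measurable D -> partition_of setT P ->
  partition_of D (pjoin [set D] P).
Proof.
move=> mD [fin mP disj cov]; rewrite pjoin1E; split.
- exact: finite_image.
- move=> _ [A PA <-]; split; [exact: measurableI (mP A PA).1 | exact: subIsetl].
- move=> _ _ [A PA <-] [B PB <-] [x [[_ xA] [_ xB]]].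
  by rewrite (disj A B) //; exists x.
- apply/seteqP; split => x.
  + by move=> [_ [A PA <-] [xD _]].
  + move=> Dx; have : (\bigcup_(A in P) A) x by rewrite cov.
    by move=> [A PA xA]; exists (D `&` A) => //; exists A.
Qed.

Theorem mainTheorem6 (R : realType) (d : nat -> measure_display)
  (X : forall n, measurableType (d n))
  (mu : forall n, probability (X n) R)
  (f : forall n, X n -> X n.+1)
  (Y Z : forall n, set (X n)) (c : R)
  (E : set (forall n, set (set (X n)))) :
  (forall n, measurable_fun setT (f n)) ->
  (forall n A, measurable A -> mu n (f n @^-1` A) = mu n.+1 A) ->
  (forall n, measurable (Y n)) -> (forall n, measurable (Z n)) ->
  (forall n, Y n `&` Z n = set0) -> (forall n, Y n `|` Z n = setT) ->
  (forall n, f n @` Y n `<=` Y n.+1) -> (forall n, f n @` Z n `<=` Z n.+1) ->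
  0 < c -> c <= 1 ->
  (forall n, mu n (Y n) = c%:E) ->
  admissible (fun n => setT) f E ->
  (forall P, E P -> E (fun n => pjoin (P n) ([set Y n] `|` [set Z n]))) ->
  let EY := restrict_class Y E in
  let hf := ent_class (fun n => setT) f (fun A => fine (mu 0%N A)) E in
  let hg := ent_class Y f (fun A => fine (mu 0%N A) / c) EY in
  [/\ admissible Y f EY,
      (c%:E * hg <= hf)%E &
      (c = 1 -> hg = hf)].
Proof.
move=> fmeas fmu mY mZ YZ0 YZT fY fZ c0 c1 muY [E0 Epart Ecard Ecoarse Ejoin]
  Etil EY hf hg.
have Yne n : Y n !=set0.
  apply/set0P; apply/eqP => Y0; move: (muY n); rewrite Y0 measure0 => -[c00].
  by rewrite -c00 ltxx in c0.
have partB : (c%:E * hg <= hf)%E.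
  rewrite /hg /hf /ent_class -ereal_sup_pZl //.
  apply: ge_ereal_sup => _ [_ [Q [P EP hQ] <-] <-].
  set Pt := fun n => pjoin (P n) ([set Y n] `|` [set Z n]).
  have EPt : E Pt by exact: Etil.
  apply: le_ereal_sup_tmp; exists (ent_seq (fun n => setT) f (fun A => fine (mu 0%N A)) Pt).
    by exists Pt.
  apply: limsup_scale => // -[|n].
    by rewrite mulr0n invr0 !mulr0 mule0.
  rewrite -EFinM lee_fin mulrA ler_wpM2r // ?invr_ge0 ?ler0n //.
  have [fin mS _ _] := Epart _ (Ejoin Pt n.+1 EPt isT) 0%N.
  apply: ent_ineq => //; last by move=> A /mS [].
  rewrite (@djoin_restr _ _ _ _ fY _ _ hQ) pjoin1E => _ [B HB <-]; exact: (@djoin_til _ _ _ _ fY).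
split => //.
- split.
  + case: E0 => P EP; exists (fun n => pjoin [set Y n] (P n)); by exists P.
  + by move=> Q [P EP hQ] n; rewrite hQ; apply: part_restr => //; exact: Epart.
  + move=> Q [P EP hQ]; have [N HN] := Ecard P EP; exists N => n.
    have [F HF] := HN n; exists (fun i => Y n `&` F i).
    by rewrite hQ pjoin1E HF image_comp.
  + move=> Q Q' [P EP hQ] hQ'.
    set Pt := fun n => pjoin (P n) ([set Y n] `|` [set Z n]).
    have EPt : E Pt by exact: Etil.
    pose B0 n := xget set0 (Q' n).
    have QB0 n : Q' n (B0 n).
      apply: xgetPex; have [[_ _ _ cov] _] := hQ' n.
      have [x xY] := Yne n; have : (\bigcup_(A in Q' n) A) x by rewrite cov.
      by move=> [A QA _]; exists A.
    have QY n A : Q' n A -> A `<=` Y n.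
      by have [[_ mQ _ _] _] := hQ' n; move=> /mQ [].
    have YB0 n : Y n `&` (B0 n `|` Z n) = B0 n.
      apply/seteqP; split => x.
        move=> [xY [//|xZ]]; have : (Y n `&` Z n) x by [].
        by rewrite YZ0.
      by move=> xB; split; [exact: QY (QB0 n) _ xB | left].
    exists (fun n => (Q' n `\` [set B0 n]) `|` [set B0 n `|` Z n]); last first.
      move=> n; rewrite pjoin1E; apply/seteqP; split.
        move=> B QB; have [->|nB] := pselect (B = B0 n).
          by exists (B0 n `|` Z n); [right | exact: YB0].
        by exists B; [left | exact/setIidr/QY].
      move=> _ [A [[QA _] | ->] <-]; first by rewrite setIidr //; exact: QY.
      by rewrite YB0.
    apply: (Ecoarse Pt) => // n; have [[fin mQ disj cov] crs] := hQ' n; split.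
    * split.
      -- by rewrite finite_setU; split; [exact: finite_setD | exact: finite_set1].
      -- move=> A [[QA _] | ->]; first by split => //; exact: (mQ A QA).1.
         by split => //; apply: measurableU => //; exact: (mQ _ (QB0 n)).1.
      -- have key A x : Q' n A -> A x -> (B0 n `|` Z n) x -> A = B0 n.
           move=> QA xA [xB|xZ]; first by apply: disj => //; exists x.
           have : (Y n `&` Z n) x by split => //; exact: QY QA _ xA.
           by rewrite YZ0.
         move=> A B [[QA nA]|->] [[QB nB]|->] [x [xA xB]].
         ++ by apply: disj => //; exists x.
         ++ by have := key A x QA xA xB.
         ++ by have := key B x QB xB xA.
         ++ by [].
      -- apply/seteqP; split => x // _.
         have : (Y n `|` Z n) x by rewrite YZT.
         move=> [xY|xZ]; last by exists (B0 n `|` Z n); [right | right].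
         have : (\bigcup_(A in Q' n) A) x by rewrite cov.
         move=> [A QA xA]; have [eA|nA] := pselect (A = B0 n).
           by exists (B0 n `|` Z n); [right | left; rewrite -eA].
         by exists A; [left|].
    * move=> C [A PA [W [->|->] ->]].
        have : Q n (Y n `&` A) by rewrite hQ pjoin1E; exists A.
        move=> /crs [B QB sB]; have [eB|nB] := pselect (B = B0 n).
          exists (B0 n `|` Z n); first by right.
          by move=> x [xA xY]; left; rewrite -eB; apply: sB.
        by exists B; [left | rewrite setIC].
      by exists (B0 n `|` Z n); [right | move=> x [_ xZ]; right].
  + move=> Q m [P EP hQ] m1; exists (djoin (fun n => setT) f P m).
      exact: Ejoin.
    by move=> k; exact: (@djoin_restr _ _ _ _ fY _ _ hQ).
- move=> c1'; apply/le_anti/andP; split.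
    by move: partB; rewrite c1' mul1e.
  rewrite /hg /hf /ent_class; apply: ge_ereal_sup => _ [P EP <-].
  apply: le_ereal_sup_tmp.
  exists (ent_seq Y f (fun A => fine (mu 0%N A) / c)
                  (fun n => pjoin [set Y n] (P n))); last first.
    rewrite le_eqVlt; apply/orP; left; apply/eqP/esym; rewrite /ent_seq; congr (limn_esup _); apply/funext => -[|n].
      by rewrite mulr0n invr0 !mulr0.
    rewrite (@djoin_restr _ _ _ _ fY P _ (fun n => erefl)) c1'.
    have [fin mS disj _] := Epart _ (Ejoin P n.+1 EP isT) 0%N.
    rewrite ent_eq1 //; last by move=> A /mS [].
    by rewrite (muY 0%N) c1'.
  by exists (fun n => pjoin [set Y n] (P n)) => //; exists P.
Qed.
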